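(* Let $A$ be an $n\times(n+1)$ matrix over a commutative ring with columns $A_1,\dots,A_{n+1}$. For $1\le l\le n+1$ let $A^{(l)}$ be the $n\times n$ matrix obtained from $A$ by deleting the column $A_l$. For a subset $I\subset\{1,\dots,n\}$ let $A(I)$ be the $n\times n$ matrix whose $i$-th row equals the $i$-th row of $A^{(n+1)}$ if $i\in I$ and the $i$-th row of $A^{(1)}$ if $i\notin I$. Then for every $1\le l\le n+1$, $$\det A^{(l)}=\sum_{I\subset\{1,\dots,n\},\ |I|=l-1}\det A(I).$$ *)

(* Defs.v *)
From mathcomp Require Import all_boot all_order all_algebra.
Set Implicit Arguments. Unset Strict Implicit. Unset Printing Implicit Defensive.
Import GRing.Theory.
Local Open Scope ring_scope.

(* A^(l): delete column l (0-based index l : 'I_n.+1) of an n x (n+1) matrix *)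
Definition delcol (R : comPzRingType) (n : nat) (A : 'M[R]_(n, n.+1)) (l : 'I_n.+1)
  : 'M[R]_n := colsub (lift l) A.

Definition mixmx (R : comPzRingType) (n : nat) (A : 'M[R]_(n, n.+1)) (I : {set 'I_n})
  : 'M[R]_n :=
  \matrix_(i < n, j < n)
    (if i \in I then delcol A ord_max i j else delcol A ord0 i j).

(* Main.v *)
Require Import Defs.
From mathcomp Require Import all_boot all_order all_algebra.
From mathcomp Require Import fingroup perm.
Set Implicit Arguments. Unset Strict Implicit. Unset Printing Implicit Defensive.
Import GRing.Theory.
Local Open Scope ring_scope.

Lemma step_nat (P : nat -> bool) (a b : nat) :
  (b < a)%N -> ~~ P b -> P a -> exists m, [/\ (b <= m)%N, (m < a)%N, ~~ P m & P m.+1].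
Proof.
elim: a => [//|a IH] ba nPb Pa.
case Pa': (P a).
- have ba' : (b < a)%N.
    rewrite ltn_neqAle -ltnS ba andbT; apply/eqP => E; by rewrite E Pa' in nPb.
  have [m [h1 h2 h3 h4]] := IH ba' nPb Pa'.
  by exists m; split => //; apply: ltnW.
- by exists a; split => //; rewrite ?Pa' // -ltnS.
Qed.

Definition gsel n (b : bool) (j : 'I_n) : 'I_n.+1 :=
  if b then lift ord_max j else lift ord0 j.

Definition fJ n (J : {set 'I_n}) (j : 'I_n) : 'I_n.+1 := gsel (j \in J) j.

Lemma stepA (R : comPzRingType) (n : nat) (A : 'M[R]_(n, n.+1)) (l : nat) :
  \sum_(I : {set 'I_n} | #|I| == l) \det (mixmx A I)
  = \sum_(J : {set 'I_n} | #|J| == l) \det (colsub (fJ J) A).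
Proof.
rewrite /determinant.
rewrite (exchange_big _ _ _ (fun I : {set 'I_n} => #|I| == l)).
rewrite [RHS](exchange_big _ _ _ (fun I : {set 'I_n} => #|I| == l)).
apply: eq_bigr => s _.
rewrite (reindex_inj (imset_inj (perm_inj (s:=(s^-1)%g)))) /=.
apply: eq_big => [I|I _].
  by rewrite card_imset //; exact: (perm_inj (s:=(s^-1)%g)).
congr (_ * _); apply: eq_bigr => i _.
rewrite !mxE /fJ -{1}(permK s i) mem_imset; last exact: (perm_inj (s:=(s^-1)%g)).
by case: (s i \in I).
Qed.

Lemma det_colsub_noninj (R : comPzRingType) (n : nat) (A : 'M[R]_(n, n.+1))
  (f : 'I_n -> 'I_n.+1) a b : a != b -> f a = f b -> \det (colsub f A) = 0.
Proof.
move=> ab fab; rewrite -det_tr.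
apply: (determinant_alternate ab) => j; by rewrite !mxE fab.
Qed.

Theorem mainTheorem5 (R : comPzRingType) (n : nat) (A : 'M[R]_(n, n.+1)) (l : 'I_n.+1) :
  \det (delcol A l) = \sum_(I : {set 'I_n} | #|I| == nat_of_ord l) \det (mixmx A I).
Proof.
rewrite stepA.
set J0 := [set j : 'I_n | (j < l)%N].
have cJ0 : #|J0| = l.
  have ln : (l <= n)%N by rewrite -ltnS.
  have -> : J0 = [set widen_ord ln j | j : 'I_l].
    apply/setP => j; rewrite inE; apply/idP/imsetP.
      by move=> jl; exists (Ordinal jl) => //; apply: val_inj.
    by case=> k _ ->; rewrite /= ltn_ord.
  rewrite card_imset ?card_ord //; move=> x y /(congr1 val) /= E; exact: val_inj.
rewrite (bigD1 J0) /=; last by rewrite cJ0.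
rewrite big1 ?addr0.
  congr (\det _); apply/matrixP => i j; rewrite !mxE /fJ /gsel inE.
  congr (A i _); apply: val_inj => /=.
  rewrite /bump; case: ltnP => jl /=.
    by rewrite /bump leqNgt ltn_ord.
  by rewrite /bump leq0n.
move=> J /andP [cJ neJ].
have [a aJ aJ0] : exists2 a, a \in J & a \notin J0.
  apply/exists_inP; rewrite -negb_forall_in; apply/negP => /forall_inP hsub.
  have sJ : J \subset J0 by apply/subsetP => x /hsub.
  move/negP: neJ; apply; by rewrite -(subset_leqif_cards sJ).2 (eqP cJ) cJ0 eqxx.
have [b bJ0 bJ] : exists2 b, b \in J0 & b \notin J.
  apply/exists_inP; rewrite -negb_forall_in; apply/negP => /forall_inP hsub.
  have sJ : J0 \subset J by apply/subsetP => x /hsub; rewrite ?negbK.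
  move/negP: neJ; apply; by rewrite eq_sym -(subset_leqif_cards sJ).2 (eqP cJ) cJ0 eqxx.
move: aJ0 bJ0; rewrite !inE -leqNgt => la bl.
pose P k := [exists j : 'I_n, (val j == k) && (j \in J)].
have nPb : ~~ P b.
  apply/existsP => -[j /andP [/eqP jb jJ]].
  by have := bJ; rewrite (_ : b = j) ?jJ //; apply: val_inj.
have Pa : P a by apply/existsP; exists a; rewrite eqxx aJ.
have [m [h1 h2 h3 /existsP [j /andP [/eqP jm jJ]]]] :=
  step_nat (leq_trans bl la) nPb Pa.
have mn : (m < n)%N by apply: (ltn_trans h2).
pose m' := Ordinal mn.
have m'J : m' \notin J.
  apply/negP => mJ; move/negP: h3; apply; apply/existsP; exists m'; by rewrite eqxx mJ.
apply: (@det_colsub_noninj _ _ _ _ m' j).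
  by apply/eqP => /(congr1 val) /=; rewrite jm => /eqP; rewrite ltn_eqF.
rewrite /fJ /gsel (negbTE m'J) jJ; apply: val_inj => /=.
by rewrite /bump leq0n /= leqNgt ltn_ord jm add1n.
Qed.
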